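(* There is an absolute constant $C>0$ such that for every positive integer $d$ and all $\alpha,\beta\in[0,1]$ with $\alpha>\beta$, the $(\alpha,\beta,d,\ell)$-InnerProduct problem can be solved with space \[ \ell \le d\log_2\!\left(\frac{\sqrt{1-\beta}}{\alpha-\beta}\right)+C d . \]
   Context: $\mathbb{S}^{d-1}$ denotes the Euclidean unit sphere in $\mathbb{R}^d$, and $\langle x,y\rangle=\sum_{i=1}^d x_iy_i$. For positive integers $d,\ell$ and $\alpha,\beta\in[0,1]$ with $\alpha>\beta$, the $(\alpha,\beta,d,\ell)$-InnerProduct problem is to construct maps $\mathcal{E}:\mathbb{S}^{d-1}\to\{0,1\}^\ell$ and $\mathcal{D}:\{0,1\}^\ell\to\mathbb{S}^{d-1}$ and a threshold $t\in\mathbb{R}$ such that for all $x,y\in\mathbb{S}^{d-1}$: - if $\langle x,y\rangle\ge\alpha$ then $\langle \mathcal{D}(\mathcal{E}(x)),\mathcal{D}(\mathcal{E}(y))\rangle\ge t$; - if $\langle x,y\rangle\le\beta$ then $\langle \mathcal{D}(\mathcal{E}(x)),\mathcal{D}(\mathcal{E}(y))\rangle< t$. The problem is solved with space $\ell$ if such $\mathcal{E},\mathcal{D},t$ exist. *)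

(* Defs.v *)
From Stdlib Require Import Reals List.
Import ListNotations.
Open Scope R_scope.

Fixpoint inner (x y : list R) : R :=
  match x, y with
  | a :: xs, b :: ys => a * b + inner xs ys
  | _, _ => 0
  end.

Definition sphere (d : nat) : Type :=
  { x : list R | length x = d /\ inner x x = 1 }.

Definition bits (l : nat) : Type := { b : list bool | length b = l }.

Definition log2 (x : R) : R := ln x / ln 2.

Definition InnerProduct_solvable (alpha beta : R) (d l : nat) : Prop :=
  exists (E : sphere d -> bits l) (D : bits l -> sphere d) (t : R),
    forall x y : sphere d,
      (inner (proj1_sig x) (proj1_sig y) >= alpha ->
         inner (proj1_sig (D (E x))) (proj1_sig (D (E y))) >= t) /\
      (inner (proj1_sig x) (proj1_sig y) <= beta ->
         inner (proj1_sig (D (E x))) (proj1_sig (D (E y))) < t).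

(* Main.v *)
Require Import Defs.
From Stdlib Require Import Reals Lra Lia Psatz ZArith List ClassicalEpsilon.
Import ListNotations.
Open Scope R_scope.

Fixpoint vsub (u v : list R) : list R :=
  match u, v with a::u', b::v' => (a-b) :: vsub u' v' | _,_ => [] end.
Definition scal (k:R) (u:list R) := map (fun a => k*a) u.

Lemma inner_sym u v : inner u v = inner v u.
Proof. revert v; induction u as [|a u IH]; destruct v; simpl; try lra. rewrite IH; lra. Qed.

Lemma inner_nonneg u : 0 <= inner u u.
Proof. induction u; simpl; nra. Qed.

Lemma vsub_length u v : length u = length v -> length (vsub u v) = length u.
Proof. revert v; induction u; destruct v; simpl; intros; try lia. f_equal; apply IHu; lia. Qed.

Lemma inner_vsub_l u v w : length u = length v -> inner (vsub u v) w = inner u w - inner v w.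
Proof. revert v w; induction u; destruct v, w; simpl; intros; try lia; try lra.
  rewrite IHu by lia. lra. Qed.

Lemma inner_scal_l k u w : inner (scal k u) w = k * inner u w.
Proof. revert w; induction u; destruct w; simpl; try lra. rewrite IHu. lra. Qed.

Lemma scal_length k u : length (scal k u) = length u.
Proof. apply length_map. Qed.

Lemma CS u v : length u = length v -> (inner u v)^2 <= inner u u * inner v v.
Proof.
  intros Hl.
  assert (H : forall t, 0 <= inner u u - 2*t*inner u v + t^2 * inner v v).
  { intro t. pose proof (inner_nonneg (vsub u (scal t v))) as H0.
    rewrite inner_vsub_l in H0 by (rewrite scal_length; auto).
    rewrite inner_scal_l in H0.
    rewrite (inner_sym u), (inner_sym v) in H0.
    rewrite !inner_vsub_l in H0 by (rewrite scal_length; auto).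
    rewrite !inner_scal_l in H0. rewrite (inner_sym v u) in H0. nra. }
  set (p := inner u v) in *. set (uu := inner u u) in *. set (vv := inner v v) in *.
  assert (Hv : 0 <= vv) by apply inner_nonneg.
  destruct (Rle_lt_or_eq_dec _ _ Hv) as [Hvp|Hv0].
  - specialize (H (p/vv)).
    assert (E: uu - 2 * (p / vv) * p + (p / vv) ^ 2 * vv = uu - (p*p/vv)) by (field; lra).
    rewrite E in H.
    assert (E2 : p*p = (p*p/vv)*vv) by (field; lra).
    nra.
  - rewrite <- Hv0 in *.
    destruct (Req_dec p 0) as [Hp|Hp].
    + rewrite Hp. pose proof (inner_nonneg u). fold uu in H0. nra.
    + exfalso. specialize (H ((uu+1)/(2*p))).
      assert (E: uu - 2 * ((uu + 1) / (2 * p)) * p + ((uu + 1) / (2 * p)) ^ 2 * 0 = -1) by (field; auto).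
      lra.
Qed.

Definition dist u v := sqrt (inner (vsub u v) (vsub u v)).

Lemma dist_sq u v : length u = length v ->
  inner (vsub u v) (vsub u v) = inner u u - 2 * inner u v + inner v v.
Proof. intros Hl. rewrite inner_vsub_l by auto.
  rewrite (inner_sym u), (inner_sym v), !inner_vsub_l by auto.
  rewrite (inner_sym v u). lra. Qed.

Lemma dist_sym u v : length u = length v -> dist u v = dist v u.
Proof. intros Hl. unfold dist. rewrite !dist_sq by auto. rewrite (inner_sym v u). f_equal; lra. Qed.

Lemma dist_tri u v w : length u = length v -> length v = length w ->
  dist u w <= dist u v + dist v w.
Proof.
  intros H1 H2. unfold dist.
  set (A := vsub u v). set (Bv := vsub v w).
  assert (HAB : inner A Bv = inner u v - inner u w - inner v v + inner v w).
  { unfold A, Bv. rewrite inner_vsub_l by auto.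
    rewrite (inner_sym u (vsub v w)), (inner_sym v (vsub v w)), !inner_vsub_l by auto.
    rewrite (inner_sym w u), (inner_sym w v), (inner_sym v u). lra. }
  assert (HW : inner (vsub u w) (vsub u w) = inner A A + inner Bv Bv + 2 * inner A Bv).
  { rewrite HAB. unfold A, Bv. rewrite (dist_sq u w), (dist_sq u v), (dist_sq v w); try lia. lra. }
  assert (HC : (inner A Bv)^2 <= inner A A * inner Bv Bv).
  { apply CS. unfold A, Bv. rewrite !vsub_length; lia. }
  pose proof (inner_nonneg A). pose proof (inner_nonneg Bv).
  pose proof (sqrt_sqrt _ H) as Sa. pose proof (sqrt_sqrt _ H0) as Sb.
  pose proof (sqrt_pos (inner A A)). pose proof (sqrt_pos (inner Bv Bv)).
  set (sa := sqrt (inner A A)) in *. set (sb := sqrt (inner Bv Bv)) in *.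
  assert (inner A Bv <= sa * sb).
  { assert (E: (sa*sb)^2 = inner A A * inner Bv Bv) by (rewrite <- Sa, <- Sb; ring).
    assert (0 <= sa*sb) by (apply Rmult_le_pos; auto). nra. }
  rewrite HW. assert (Hs : 0 <= sa + sb) by lra. rewrite <- (sqrt_Rsqr (sa + sb) Hs).
  apply sqrt_le_1_alt. unfold Rsqr. nra.
Qed.
Lemma vsub_map u f : vsub u (map f u) = map (fun a => a - f a) u.
Proof. induction u; simpl; f_equal; auto. Qed.

Lemma inner_map_bound (g : R -> R) e x : (forall a, 0 <= g a <= e) ->
  inner (map g x) (map g x) <= INR (length x) * e^2.
Proof. intros Hg. induction x; cbn [inner map length]. simpl; lra.
  rewrite S_INR. specialize (Hg a). nra. Qed.

Lemma vsub_zero u : vsub u (repeat 0 (length u)) = u.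
Proof. induction u; simpl; f_equal; auto. lra. Qed.

Lemma scal_inner k w : inner (scal k w) (scal k w) = k^2 * inner w w.
Proof. rewrite inner_scal_l, inner_sym, inner_scal_l. ring. Qed.

Lemma vsub_scal w k : vsub w (scal k w) = scal (1-k) w.
Proof. induction w; simpl; f_equal; auto. ring. Qed.

Lemma dist_zero u : dist u (repeat 0 (length u)) = sqrt (inner u u).
Proof. unfold dist. rewrite vsub_zero. auto. Qed.

Lemma dist_zero' u m : length u = m -> dist u (repeat 0 m) = sqrt (inner u u).
Proof. intros <-. apply dist_zero. Qed.

Lemma normalize_ok x w eta : length x = length w -> inner x x = 1 ->
  dist x w <= eta -> eta < 1 ->
  let x' := scal (/ sqrt (inner w w)) w in
  length x' = length w /\ inner x' x' = 1 /\ dist x x' <= 2*eta.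
Proof.
  intros Hl Hx Hd He x'.
  set (n := sqrt (inner w w)).
  assert (Z1 : dist w (repeat 0 (length w)) <= dist w x + dist x (repeat 0 (length w))).
  { apply dist_tri; rewrite ?repeat_length; auto. }
  assert (Z2 : dist x (repeat 0 (length w)) <= dist x w + dist w (repeat 0 (length w))).
  { apply dist_tri; rewrite ?repeat_length; auto. }
  rewrite dist_zero in Z1, Z2. rewrite (dist_zero' x (length w)) in Z1, Z2 by auto.
  rewrite Hx, sqrt_1 in Z1, Z2. rewrite dist_sym in Z1 by auto. fold n in Z1, Z2.
  assert (Hn : 0 < n) by lra.
  assert (Hnn : n * n = inner w w) by (apply sqrt_sqrt, inner_nonneg).
  split; [apply scal_length|]. split.
  - unfold x'. rewrite scal_inner. fold n. rewrite <- Hnn. field. lra.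
  - assert (Hwx : dist w x' = Rabs (n - 1)).
    { unfold dist, x'. rewrite vsub_scal, scal_inner. fold n. rewrite <- Hnn.
      replace ((1 - / n) ^ 2 * (n * n)) with ((n-1)*(n-1)) by (field; lra).
      change ((n-1)*(n-1)) with (Rsqr (n-1)). rewrite Rsqr_abs. apply sqrt_Rsqr. apply Rabs_pos. }
    assert (T : dist x x' <= dist x w + dist w x').
    { apply dist_tri; unfold x'; rewrite ?scal_length; auto. }
    rewrite Hwx in T. unfold Rabs in T. destruct (Rcase_abs (n-1)); lra.
Qed.
Fixpoint bin (B n : nat) : list bool :=
  match B with O => [] | S B' => Nat.odd n :: bin B' (Nat.div2 n) end.
Fixpoint bval (l : list bool) : nat :=
  match l with [] => 0%nat | b::l' => (Nat.b2n b + 2 * bval l')%nat end.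

Lemma bin_length B n : length (bin B n) = B.
Proof. revert n; induction B; simpl; auto. Qed.

Lemma bval_bin B n : (n < 2^B)%nat -> bval (bin B n) = n.
Proof. revert n; induction B; simpl; intros n Hn. lia.
  pose proof (Nat.div2_odd n). rewrite IHB; lia. Qed.

Lemma app_len_inj {A : Type} (l1 l2 r1 r2 : list A) :
  length l1 = length l2 -> l1 ++ r1 = l2 ++ r2 -> l1 = l2 /\ r1 = r2.
Proof. revert l2; induction l1; destruct l2; simpl; intros; try lia; auto.
  inversion H0; subst. destruct (IHl1 l2) as [-> ->]; auto. Qed.

Lemma unary_inj q q' r r' :
  repeat true q ++ false :: r = repeat true q' ++ false :: r' -> q = q' /\ r = r'.
Proof. revert q'; induction q; destruct q'; simpl; intros H; inversion H; auto.
  destruct (IHq q') as [-> ->]; auto. Qed.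

Definition enc1 (B : nat) (z : Z) : list bool :=
  (Z.ltb z 0) :: bin B (Z.abs_nat z mod 2^B) ++ repeat true (Z.abs_nat z / 2^B) ++ [false].

Lemma enc1_length B z : length (enc1 B z) = (B + 2 + Z.abs_nat z / 2^B)%nat.
Proof. unfold enc1. simpl. rewrite !length_app, bin_length, repeat_length. simpl. lia. Qed.

Lemma enc1_inj B z z' r r' : enc1 B z ++ r = enc1 B z' ++ r' -> z = z' /\ r = r'.
Proof.
  unfold enc1. simpl. intros H. inversion H as [[Hs H1]].
  rewrite <- !app_assoc in H1.
  apply app_len_inj in H1; [|rewrite !bin_length; auto]. destruct H1 as [Hb H2].
  simpl in H2. apply unary_inj in H2. destruct H2 as [Hq ->]. split; auto.
  assert (P : (2^B <> 0)%nat) by (apply Nat.pow_nonzero; lia).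
  apply (f_equal bval) in Hb. rewrite !bval_bin in Hb by (apply Nat.mod_upper_bound; auto).
  assert (Ha : Z.abs_nat z = Z.abs_nat z').
  { rewrite (Nat.div_mod_eq (Z.abs_nat z) (2^B)), (Nat.div_mod_eq (Z.abs_nat z') (2^B)). lia. }
  apply (f_equal Z.of_nat) in Ha. rewrite !Zabs2Nat.id_abs in Ha.
  destruct (Z.ltb_spec z 0), (Z.ltb_spec z' 0); try discriminate; lia.
Qed.

Fixpoint encl (B : nat) (zs : list Z) : list bool :=
  match zs with [] => [] | z::zs' => enc1 B z ++ encl B zs' end.

Lemma encl_inj B zs zs' r r' : length zs = length zs' ->
  encl B zs ++ r = encl B zs' ++ r' -> zs = zs'.
Proof. revert zs' r r'; induction zs; destruct zs'; cbn [encl length]; intros r r' Hl H; try lia; auto.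
  rewrite <- !app_assoc in H. apply enc1_inj in H. destruct H as [-> H].
  f_equal. apply (IHzs zs' r r'); auto. Qed.

Lemma firstn_repeat' {A : Type} (a : A) k m : (k <= m)%nat -> firstn k (repeat a m) = repeat a k.
Proof. revert m; induction k; destruct m; simpl; intros; try lia; auto. f_equal; apply IHk; lia. Qed.

Definition padb (l : nat) (s : list bool) : bits l.
Proof. exists (firstn l (s ++ repeat false l)). rewrite length_firstn, length_app, repeat_length. lia. Defined.

Lemma padb_eq l s : (length s <= l)%nat -> proj1_sig (padb l s) = s ++ repeat false (l - length s).
Proof. intros H. simpl. rewrite firstn_app, firstn_all2 by auto. f_equal. apply firstn_repeat'. lia. Qed.
Lemma encl_len_bound B (h : R -> Z) A M x :
  (forall a, INR (length (enc1 B (h a))) <= A + M * (a*a)) ->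
  INR (length (encl B (map h x))) <= INR (length x) * A + M * inner x x.
Proof. intros Hp. induction x; cbn [map encl length inner].
  simpl. lra. rewrite length_app, plus_INR, S_INR. specialize (Hp a). lra. Qed.

Lemma abs_le_quad lam a : 0 < lam -> Rabs a <= (lam * (a*a) + / lam) / 2.
Proof. intros Hl. assert (E : Rabs a * Rabs a = a * a).
  { rewrite <- Rabs_mult. apply Rabs_pos_eq. nra. }
  pose proof (Rabs_pos a).
  pose proof (pow2_ge_0 (lam * Rabs a - 1)).
  apply (Rmult_le_reg_l (2*lam)); [lra|].
  replace (2 * lam * ((lam * (a * a) + / lam) / 2)) with (lam*lam*(a*a) + 1) by (field; lra).
  nra. Qed.

Lemma int_part_abs r : Rabs (IZR (Int_part r)) <= Rabs r + 1.
Proof. destruct (base_Int_part r) as [H1 H2].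
  unfold Rabs; destruct (Rcase_abs (IZR (Int_part r))), (Rcase_abs r); lra. Qed.

Lemma INR_div_le n P : (P <> 0)%nat -> INR (n / P) <= INR n / INR P.
Proof. intros HP. pose proof (Nat.Div0.mul_div_le n P).
  apply le_INR in H. rewrite mult_INR in H.
  assert (0 < INR P) by (apply lt_0_INR; lia).
  apply (Rmult_le_reg_l (INR P)); auto. replace (INR P * (INR n / INR P)) with (INR n) by (field; lra). lra. Qed.

Lemma INR_abs_nat z : INR (Z.abs_nat z) = Rabs (IZR z).
Proof. rewrite INR_IZR_INZ, Zabs2Nat.id_abs, abs_IZR. auto. Qed.


Definition cc (d : nat) (K : R) := sqrt (INR d) * K.
Definition zf d K (x : list R) := map (fun a => Int_part (cc d K * a)) x.
Definition wf d K (zs : list Z) := map (fun z => IZR z / cc d K) zs.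
Definition nq d K (zs : list Z) := scal (/ sqrt (inner (wf d K zs) (wf d K zs))) (wf d K zs).

Lemma quant_geom d K x : (1 <= d)%nat -> 2 <= K -> length x = d -> inner x x = 1 ->
  length (nq d K (zf d K x)) = d /\ inner (nq d K (zf d K x)) (nq d K (zf d K x)) = 1 /\
  dist x (nq d K (zf d K x)) <= 2 / K.
Proof.
  intros Hd HK Hl Hx.
  assert (Hd' : 1 <= INR d) by (apply (le_INR 1); auto).
  assert (Hs : 0 < sqrt (INR d)) by (apply sqrt_lt_R0; lra).
  assert (Hss : sqrt (INR d) * sqrt (INR d) = INR d) by (apply sqrt_sqrt; lra).
  set (c := cc d K). assert (Hc : 0 < c) by (unfold c, cc; nra).
  assert (Ew : wf d K (zf d K x) = map (fun a => IZR (Int_part (c*a)) / c) x).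
  { unfold wf, zf. rewrite map_map. reflexivity. }
  assert (Hdw : dist x (wf d K (zf d K x)) <= / K).
  { rewrite Ew. unfold dist. rewrite vsub_map.
    eapply Rle_trans. apply sqrt_le_1_alt. apply (inner_map_bound _ (/c)).
    { intros a. destruct (base_Int_part (c*a)) as [H1 H2].
      split.
      - apply (Rmult_le_reg_l c); auto. rewrite Rmult_0_r.
        replace (c * (a - IZR (Int_part (c * a)) / c)) with (c*a - IZR (Int_part (c * a))) by (field; lra). lra.
      - apply (Rmult_le_reg_l c); auto.
        replace (c * (a - IZR (Int_part (c * a)) / c)) with (c*a - IZR (Int_part (c * a))) by (field; lra).
        rewrite Rinv_r by lra. lra. }
    rewrite Hl.
    replace (INR d * (/ c)^2) with ((/K)^2).
    2:{ unfold c, cc. set (s := sqrt (INR d)) in *. rewrite <- Hss. field. lra. }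
    rewrite sqrt_pow2; [lra|]. left. apply Rinv_0_lt_compat. lra. }
  assert (Hlw : length x = length (wf d K (zf d K x))) by (unfold wf, zf; rewrite !length_map; auto).
  assert (HK1 : / K < 1) by (apply (Rmult_lt_reg_l K); [lra|]; rewrite Rinv_r by lra; lra).
  destruct (normalize_ok x (wf d K (zf d K x)) (/K) Hlw Hx Hdw HK1) as [A1 [A2 A3]].
  unfold nq. split; [|split].
  - rewrite A1, <- Hlw; auto.
  - exact A2.
  - unfold Rdiv. lra.
Qed.

Lemma quant_len d B K x : (1 <= d)%nat -> 2 <= K -> 2^B <= K < 2 * 2^B ->
  length x = d -> inner x x = 1 ->
  (length (encl B (zf d K x)) <= d * (B + 5))%nat.
Proof.
  intros Hd HK [HB1 HB2] Hl Hx.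
  assert (Hd' : 1 <= INR d) by (apply (le_INR 1); auto).
  assert (Hs : 0 < sqrt (INR d)) by (apply sqrt_lt_R0; lra).
  assert (Hss : sqrt (INR d) * sqrt (INR d) = INR d) by (apply sqrt_sqrt; lra).
  set (P := 2^B) in *.
  assert (HP1 : 1 <= P) by (unfold P; apply pow_R1_Rle; lra).
  assert (HPn : INR (2^B) = P) by (unfold P; rewrite pow_INR; simpl; f_equal; lra).
  assert (HP0 : (2^B <> 0)%nat) by (apply Nat.pow_nonzero; lia).
  set (lam := sqrt (INR d)).
  set (A := INR B + 2 + (K/2 + 1) / P).
  set (M := INR d * K / (2 * P)).
  assert (H : INR (length (encl B (zf d K x))) <= INR (length x) * A + M * inner x x).
  { apply encl_len_bound. intros a. rewrite enc1_length, !plus_INR.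
    eapply Rle_trans. apply Rplus_le_compat_l. apply INR_div_le; auto.
    rewrite HPn, INR_abs_nat.
    pose proof (int_part_abs (cc d K * a)).
    pose proof (abs_le_quad lam a Hs).
    rewrite Rabs_mult, (Rabs_pos_eq (cc d K)) in H by (unfold cc; nra).
    assert (E : cc d K * ((lam * (a * a) + / lam) / 2) = M * P * (a*a) + K/2).
    { unfold M, cc, lam. set (s := sqrt (INR d)) in *. rewrite <- Hss. field. lra. }
    assert (H1 : Rabs (IZR (Int_part (cc d K * a))) <= M*P*(a*a) + K/2 + 1).
    { assert (0 <= cc d K) by (unfold cc; nra). nra. }
    assert (H2 : Rabs (IZR (Int_part (cc d K * a))) / P <= M*(a*a) + (K/2+1)/P).
    { replace (M*(a*a) + (K/2+1)/P) with ((M*P*(a*a) + K/2 + 1)/P) by (field; lra).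
      unfold Rdiv. apply Rmult_le_compat_r; auto. left; apply Rinv_0_lt_compat; lra. }
    unfold A. simpl (INR 2). lra. }
  rewrite Hx, Hl in H.
  assert (Hf : INR d * A + M * 1 < INR (d * (B + 5))).
  { rewrite mult_INR, plus_INR. simpl (INR 5).
    unfold A, M.
    assert (K / P < 2) by (apply (Rmult_lt_reg_l P); [lra|]; field_simplify; lra).
    assert (1 / P <= 1) by (apply (Rmult_le_reg_l P); [lra|]; field_simplify; lra).
    replace (INR d * (INR B + 2 + (K / 2 + 1) / P) + INR d * K / (2 * P) * 1)
      with (INR d * (INR B + 2) + INR d * (K/P + 1/P)) by (field; lra).
    nra. }
  apply INR_le. lra.
Qed.
Lemma unit_dist u v : length u = length v -> inner u u = 1 -> inner v v = 1 ->
  dist u v = sqrt (2 - 2 * inner u v) /\ dist u v * dist u v = 2 - 2 * inner u v.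
Proof. intros Hl Hu Hv. unfold dist. rewrite dist_sq by auto. rewrite Hu, Hv.
  replace (1 - 2 * inner u v + 1) with (2 - 2 * inner u v) by ring. split; auto.
  apply sqrt_sqrt. pose proof (inner_nonneg (vsub u v)). rewrite dist_sq in H by auto. lra. Qed.

Definition thr (alpha beta : R) :=
  1 - ((sqrt (2 - 2*alpha) + sqrt (2 - 2*beta)) / 2)^2 / 2.

Lemma separation d alpha beta x y x' y' :
  0 <= alpha <= 1 -> 0 <= beta <= 1 -> alpha > beta ->
  length x = d -> length y = d -> length x' = d -> length y' = d ->
  inner x x = 1 -> inner y y = 1 -> inner x' x' = 1 -> inner y' y' = 1 ->
  dist x x' <= 2 / (16 * (sqrt (1 - beta) / (alpha - beta))) ->
  dist y y' <= 2 / (16 * (sqrt (1 - beta) / (alpha - beta))) ->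
  (inner x y >= alpha -> inner x' y' >= thr alpha beta) /\
  (inner x y <= beta -> inner x' y' < thr alpha beta).
Proof.
  intros Ha Hb Hab Lx Ly Lx' Ly' Nx Ny Nx' Ny' Dx Dy.
  set (s := sqrt (1 - beta)) in *.
  assert (Hs : 0 < s) by (apply sqrt_lt_R0; lra).
  assert (Hss : s * s = 1 - beta) by (apply sqrt_sqrt; lra).
  set (e := 2 / (16 * (s / (alpha - beta)))) in *.
  assert (He : e = (alpha - beta) / (8 * s)) by (unfold e; field; lra).
  set (a := sqrt (2 - 2*alpha)). set (b := sqrt (2 - 2*beta)).
  assert (Ha0 : 0 <= a) by apply sqrt_pos. assert (Hb0 : 0 <= b) by apply sqrt_pos.
  assert (Haa : a * a = 2 - 2*alpha) by (apply sqrt_sqrt; lra).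
  assert (Hbb : b * b = 2 - 2*beta) by (apply sqrt_sqrt; lra).
  assert (Hab' : a < b) by nra.
  assert (Hb2 : b <= 2 * s) by nra.
  assert (Hkey : 4 * e < b - a).
  { rewrite He. apply (Rmult_lt_reg_l (8*s)); [lra|].
    replace (8 * s * (4 * ((alpha - beta) / (8 * s)))) with (4 * (alpha - beta)) by (field; lra).
    assert (0 < 4*s - (a+b)) by lra. assert (0 < b - a) by lra.
    assert ((b-a)*(b+a) = 2*(alpha-beta)) by nra. nra. }
  unfold thr. fold a b. set (T := (a + b) / 2).
  destruct (unit_dist x y) as [Dxy Dxy2]; try lia; auto.
  destruct (unit_dist x' y') as [Dxy' Dxy2']; try lia; auto.
  assert (T1 : dist x' y' <= dist x' x + dist x y + dist y y').
  { eapply Rle_trans. apply (dist_tri x' x y'); lia.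
    pose proof (dist_tri x y y'). assert (dist x y' <= dist x y + dist y y') by (apply H; lia). lra. }
  assert (T2 : dist x y <= dist x x' + dist x' y' + dist y y').
  { eapply Rle_trans. apply (dist_tri x x' y); lia.
    pose proof (dist_tri x' y' y). rewrite (dist_sym y' y) in H by lia.
    assert (dist x' y <= dist x' y' + dist y y') by (apply H; lia). lra. }
  rewrite (dist_sym x' x) in T1 by lia.
  assert (P0 : 0 <= dist x' y') by apply sqrt_pos.
  assert (P1 : 0 <= dist x y) by apply sqrt_pos.
  split; intros Hp.
  - assert (dist x y <= a) by (rewrite Dxy; apply sqrt_le_1_alt; lra).
    assert (dist x' y' < T) by (unfold T; lra).
    assert (dist x' y' * dist x' y' <= T * T) by nra.
    nra.
  - assert (b <= dist x y) by (rewrite Dxy; apply sqrt_le_1_alt; lra).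
    assert (T < dist x' y') by (unfold T; lra).
    assert (T * T < dist x' y' * dist x' y') by (unfold T in *; nra).
    nra.
Qed.

Lemma exists_B K : 1 <= K -> exists B : nat, 2^B <= K < 2 * 2^B.
Proof.
  intros HK.
  assert (HN : exists N, K < 2^N).
  { destruct (archimed K) as [H1 _].
    assert (Hu : (0 <= up K)%Z) by (apply le_IZR; lra).
    exists (Z.to_nat (up K)).
    assert (forall n, INR n + 1 <= 2^n).
    { induction n. simpl; lra. rewrite S_INR. simpl. pose proof (pos_INR n). lra. }
    specialize (H (Z.to_nat (up K))). rewrite INR_IZR_INZ, Z2Nat.id in H by auto. lra. }
  destruct HN as [N HN]. revert HN. induction N; intros HN.
  - simpl in HN. lra.
  - destruct (Rlt_le_dec K (2^N)) as [h|h]; auto.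
    exists N. simpl in HN. lra.
Qed.

Lemma sphere_inh d : (1 <= d)%nat -> inhabited (sphere d).
Proof. intros Hd. constructor. exists (1 :: repeat 0 (d-1)). split.
  simpl. rewrite repeat_length. lia.
  simpl. assert (forall n, inner (repeat 0 n) (repeat 0 n) = 0) by (induction n; simpl; lra).
  rewrite H. lra. Qed.

Lemma qg_sphere d K (Hd : (1 <= d)%nat) (HK : 2 <= K) (x : sphere d) :
  length (nq d K (zf d K (proj1_sig x))) = d /\
  inner (nq d K (zf d K (proj1_sig x))) (nq d K (zf d K (proj1_sig x))) = 1.
Proof. destruct x as [x [Hl Hx]]. simpl.
  destruct (quant_geom d K x Hd HK Hl Hx) as [A [B _]]. auto. Qed.

Definition Qf d K Hd HK (x : sphere d) : sphere d :=
  exist _ (nq d K (zf d K (proj1_sig x))) (qg_sphere d K Hd HK x).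

Theorem mainTheorem1 :
  exists C : R, 0 < C /\
    forall (d : nat), (1 <= d)%nat ->
    forall alpha beta : R,
      0 <= alpha <= 1 -> 0 <= beta <= 1 -> alpha > beta ->
      exists l : nat,
        INR l <= INR d * log2 (sqrt (1 - beta) / (alpha - beta)) + C * INR d /\
        InnerProduct_solvable alpha beta d l.
Proof.
  exists 9. split; [lra|].
  intros d Hd alpha beta Ha Hb Hab.
  set (s := sqrt (1 - beta)).
  assert (Hs : 0 < s) by (apply sqrt_lt_R0; lra).
  assert (Hss : s * s = 1 - beta) by (apply sqrt_sqrt; lra).
  set (R0 := s / (alpha - beta)).
  assert (HR0 : 1 <= R0).
  { unfold R0. apply (Rmult_le_reg_l (alpha - beta)); [lra|].
    replace ((alpha - beta) * (s / (alpha - beta))) with s by (field; lra). nra. }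
  set (K := 16 * R0).
  assert (HK : 2 <= K) by (unfold K; lra).
  destruct (exists_B K) as [B HB]; [lra|].
  exists (d * (B + 5))%nat. split.
  - rewrite mult_INR, plus_INR. simpl (INR 5).
    assert (Hl2 : 0 < ln 2) by (pose proof ln_lt_2; lra).
    assert (HBl : INR B * ln 2 <= ln K).
    { rewrite <- ln_pow by lra. destruct (proj1 HB) as [h|h].
      - left. apply ln_increasing; auto. apply pow_lt; lra.
      - rewrite h. lra. }
    assert (HK2 : ln K = 4 * ln 2 + ln R0).
    { unfold K. rewrite ln_mult by lra. replace 16 with (2^4) by (simpl; lra).
      rewrite ln_pow by lra. simpl. lra. }
    assert (HB' : INR B <= 4 + log2 R0).
    { unfold log2. apply (Rmult_le_reg_r (ln 2)); auto.
      replace ((4 + ln R0 / ln 2) * ln 2) with (4 * ln 2 + ln R0) by (field; lra). lra. }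
    fold s. fold R0.
    assert (0 <= INR d) by apply pos_INR. nra.
  - unfold InnerProduct_solvable.
    set (l := (d * (B + 5))%nat).
    set (E := fun x : sphere d => padb l (encl B (zf d K (proj1_sig x)))).
    set (inh := sphere_inh d Hd).
    set (D := fun bb : bits l => Qf d K Hd HK (epsilon inh (fun x => E x = bb))).
    exists E, D, (thr alpha beta).
    assert (HDE : forall x, proj1_sig (D (E x)) = nq d K (zf d K (proj1_sig x))).
    { intros x. unfold D. set (x0 := epsilon inh (fun z => E z = E x)).
      assert (H0 : E x0 = E x) by (apply (epsilon_spec inh (fun z => E z = E x)); eauto).
      simpl. f_equal.
      apply (f_equal (@proj1_sig _ _)) in H0. unfold E in H0.
      destruct x0 as [x0 [L0 N0]]. destruct x as [x1 [L1 N1]]. simpl in *.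
      change (proj1_sig (padb l (encl B (zf d K x0))) = proj1_sig (padb l (encl B (zf d K x1)))) in H0. rewrite !padb_eq in H0 by (apply quant_len; auto).
      apply encl_inj in H0; auto. unfold zf. rewrite !length_map. lia. }
    intros x y. rewrite !HDE.
    destruct x as [x [Lx Nx]]. destruct y as [y [Ly Ny]]. simpl.
    destruct (quant_geom d K x Hd HK Lx Nx) as [A1 [A2 A3]].
    destruct (quant_geom d K y Hd HK Ly Ny) as [B1 [B2 B3]].
    apply (separation d); auto.
Qed.
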